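(* Let $\mathcal{H}$ be a real Hilbert space and $F:\mathcal{H}\rightrightarrows\mathcal{H}$ a set-valued operator with $\operatorname{zer}F:=\{x:0\in F(x)\}\neq\varnothing$. Let $(\gamma_n)_{n}\subset(0,+\infty)$ and $(\alpha_n)_n\subset[0,1]$. Assume there is a linear map $v:\mathcal{H}\to\mathcal{H}$ such that the pair $(F,v)$ is monotone and, for every $n$, $\gamma_nF+v$ is injective and $\operatorname{ran}v\subset\operatorname{ran}(\gamma_nF+v)$. Let $x_0,x_1\in\mathcal{H}$ and for $n\ge1$ define \[ y_n=x_n+\alpha_n(x_n-x_{n-1}),\qquad x_{n+1}=(\gamma_nF+v)^{-1}\big(v(y_n)\big), \] i.e. $x_{n+1}$ is the unique point with $v(y_n)\in\gamma_nF(x_{n+1})+v(x_{n+1})$. Let $x^*\in\operatorname{zer}F$ and $a_n:=\|v(x_n)-v(x^* )\|^2$. Then for each $n\ge1$, \[ a_{n+1}-a_n-\alpha_n(a_n-a_{n-1})\le(\alpha_n-1)\|v(x_{n+1})-v(x_n)\|^2+2\alpha_n\|v(x_n)-v(x_{n-1})\|^2 . \]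
   Context: For set-valued $F_1,F_2:\mathcal{H}\rightrightarrows\mathcal{H}$, the pair $(F_1,F_2)$ is monotone if $\langle x_1^*-y_1^*,x_2^*-y_2^*\rangle\ge0$ for all $x,y\in\mathcal{H}$, $x_1^*\in F_1(x)$, $y_1^*\in F_1(y)$, $x_2^*\in F_2(x)$, $y_2^*\in F_2(y)$. $\operatorname{ran}$ denotes the range (union of all values). *)

(* Defs.v *)
From HB Require Import structures.
From mathcomp Require Import all_boot all_order all_algebra.
From mathcomp Require Import boolp classical_sets reals.
Set Implicit Arguments. Unset Strict Implicit. Unset Printing Implicit Defensive.
Import Order.TTheory GRing.Theory Num.Theory.
Local Open Scope ring_scope.
Local Open Scope classical_set_scope.

Record inner_product (R : realType) (V : lmodType R) := InnerProduct {
  ip :> V -> V -> R;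
  ipC : forall x y, ip x y = ip y x;
  ipDl : forall x y z, ip (x + y) z = ip x z + ip y z;
  ipZl : forall (a : R) x y, ip (a *: x) y = a * ip x y;
  ip_ge0 : forall x, 0 <= ip x x;
  ip_eq0 : forall x, ip x x = 0 -> x = 0
}.

Definition ipnorm (R : realType) (V : lmodType R) (ip : inner_product V) (x : V) : R :=
  Num.sqrt (ip x x).

Definition ip_complete (R : realType) (V : lmodType R) (ip : inner_product V) : Prop :=
  forall u : nat -> V,
    (forall e : R, 0 < e -> exists N : nat, forall m n : nat,
        (N <= m)%N -> (N <= n)%N -> ipnorm ip (u m - u n) < e) ->
    exists l : V, forall e : R, 0 < e -> exists N : nat, forall n : nat,
        (N <= n)%N -> ipnorm ip (u n - l) < e.

Definition setop (V : Type) := V -> set V.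

Definition zer (R : realType) (V : lmodType R) (F : setop V) : set V :=
  [set x | F x 0].

Definition scale_add_op (R : realType) (V : lmodType R) (g : R) (F : setop V)
  (v : V -> V) : setop V :=
  fun x => [set g *: u + v x | u in F x].

Definition setop_injective (V : Type) (F : setop V) : Prop :=
  forall x y z, F x z -> F y z -> x = y.

Definition setop_ran (V : Type) (F : setop V) : set V :=
  [set z | exists x, F x z].

Definition pair_monotone (R : realType) (V : lmodType R) (ip : inner_product V)
  (F1 F2 : setop V) : Prop :=
  forall x y x1 y1 x2 y2, F1 x x1 -> F1 y y1 -> F2 x x2 -> F2 y y2 ->
    0 <= ip (x1 - y1) (x2 - y2).

Definition single (V : Type) (f : V -> V) : setop V := fun x => [set f x].

(* Main.v *)
Require Import Defs.
From HB Require Import structures.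
From mathcomp Require Import all_boot all_order all_algebra.
From mathcomp Require Import boolp classical_sets reals.
From mathcomp Require Import ring lra.
Import Order.TTheory GRing.Theory Num.Theory.
Local Open Scope ring_scope.
Local Open Scope classical_set_scope.

Lemma foo (V : zmodType) (q s w r : V) : q + w - r = q - s + w - (r - s).
Proof. by rewrite opprB addrA -[q - s + w]addrA [- s + w]addrC !addrA subrK. Qed.
Lemma bar (V : zmodType) (q r s : V) : q - r = (q - s) - (r - s).
Proof. by rewrite opprB addrA subrK. Qed.

Section IP.
Variables (R : realType) (H : lmodType R) (ip : inner_product H).
Lemma ipDr x y z : ip x (y + z) = ip x y + ip x z.
Proof. by rewrite ipC ipDl ![ip _ x]ipC. Qed.
Lemma ipZr (a : R) x y : ip x (a *: y) = a * ip x y.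
Proof. by rewrite ipC ipZl ipC. Qed.
Lemma ipNl x y : ip (- x) y = - ip x y.
Proof. by rewrite -scaleN1r ipZl mulN1r. Qed.
Lemma ipNr x y : ip x (- y) = - ip x y.
Proof. by rewrite ipC ipNl ipC. Qed.
Lemma ipBl x y z : ip (x - y) z = ip x z - ip y z.
Proof. by rewrite ipDl ipNl. Qed.
Lemma ipBr x y z : ip x (y - z) = ip x y - ip x z.
Proof. by rewrite ipDr ipNr. Qed.
Lemma ipnorm2 x : ipnorm ip x ^+ 2 = ip x x.
Proof. by rewrite /ipnorm sqr_sqrtr // ip_ge0. Qed.
Lemma key (A B C : H) (al : R) : 0 <= al ->
  0 <= ip (B + al *: (B - C) - A) A ->
  ip A A - ip B B - al * (ip B B - ip C C)
   <= (al - 1) * ip (A - B) (A - B) + 2 * al * ip (B - C) (B - C).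
Proof.
move=> a0 M2; have P := ip_ge0 ip (A - B - (B - C)).
move: P M2; rewrite !(ipDl, ipDr, ipNl, ipNr, ipZl, ipZr).
rewrite ?[ip B A]ipC ?[ip C A]ipC ?[ip C B]ipC => P M2.
have Q := mulr_ge0 a0 P.
move: (ip A A) (ip B B) (ip C C) (ip A B) (ip A C) (ip B C) P M2 Q => a b c x y z P M2 Q.
rewrite -subr_ge0.
set L := (X in 0 <= X).
have -> : L = 2 * (x + al * (x - y) - a) + al * (a + 4 * b + c - 4 * x + 2 * y - 4 * z) by rewrite /L; ring.
apply: addr_ge0; first by rewrite mulr_ge0.
move: Q; congr (0 <= _); ring.
Qed.
End IP.

Theorem lemma4p1 (R : realType) (H : lmodType R) (ip : inner_product H)
  (Hcomplete : ip_complete ip)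
  (F : setop H) (HzerF : zer F !=set0)
  (gamma : nat -> R) (alpha : nat -> R)
  (Hgamma : forall n, 0 < gamma n)
  (Halpha : forall n, 0 <= alpha n <= 1)
  (v : {linear H -> H})
  (Hmono : pair_monotone ip F (single v))
  (Hinj : forall n, setop_injective (scale_add_op (gamma n) F v))
  (Hran : forall n, range v `<=` setop_ran (scale_add_op (gamma n) F v))
  (x : nat -> H)
  (Hiter : forall n, (1 <= n)%N ->
     scale_add_op (gamma n) F v (x n.+1)
       (v (x n + alpha n *: (x n - x n.-1))))
  (xstar : H) (Hxstar : zer F xstar) :
  let a := fun n => ipnorm ip (v (x n) - v xstar) ^+ 2 in
  forall n, (1 <= n)%N ->
    a n.+1 - a n - alpha n * (a n - a n.-1)
      <= (alpha n - 1) * ipnorm ip (v (x n.+1) - v (x n)) ^+ 2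
         + 2 * alpha n * ipnorm ip (v (x n) - v (x n.-1)) ^+ 2.
Proof.
move=> a n n1; rewrite /a !ipnorm2.
have [u Fu Eu] := Hiter n n1.
have M := Hmono _ _ _ _ _ _ Fu Hxstar (erefl (v (x n.+1))) (erefl (v xstar)).
rewrite subr0 in M.
have M2 : 0 <= ip (gamma n *: u) (v (x n.+1) - v xstar).
  by rewrite ipZl mulr_ge0 // ltW.
move: M2.
have -> : gamma n *: u = v (x n + alpha n *: (x n - x n.-1)) - v (x n.+1).
  by rewrite -Eu addrK.
rewrite linearD linearZ linearB /=.
set A := v (x n.+1) - v xstar.
set B := v (x n) - v xstar.
set C := v (x n.-1) - v xstar.
have -> : v (x n) + alpha n *: (v (x n) - v (x n.-1)) - v (x n.+1)
   = B + alpha n *: (B - C) - A.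
  by rewrite /A /B /C -bar -foo.
have -> : v (x n.+1) - v (x n) = A - B by rewrite /A /B -bar.
have -> : v (x n) - v (x n.-1) = B - C by rewrite /B /C -bar.
have [a0 a1] := andP (Halpha n).
exact: key.
Qed.
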